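(* Let $H\subseteq\binom{[n]}{3}$ be such that $\bigcup_{h\in H}h=[n]$ and every $h\in H$ contains a vertex $v$ with $d_H(v)\ge2$. Then $|H|\ge 2n/5$.
   Context: $d_H(v)=|\{h\in H: v\in h\}|$ denotes the degree of $v$ in $H$. *)

(* Defs.v *)
From mathcomp Require Import all_boot.
Set Implicit Arguments. Unset Strict Implicit. Unset Printing Implicit Defensive.

(* Vertex set [n] is modelled as 'I_n; a 3-uniform hypergraph is a set of 3-subsets. *)
Definition deg (n : nat) (H : {set {set 'I_n}}) (v : 'I_n) : nat :=
  #|[set h in H | v \in h]|.

(* Main.v *)
Require Import Defs.
From mathcomp Require Import all_boot.

Theorem lemmaA1 (n : nat) (H : {set {set 'I_n}}) :
  (forall h, h \in H -> #|h| = 3) ->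
  \bigcup_(h in H) h = [set: 'I_n] ->
  (forall h, h \in H -> exists2 v, v \in h & 2 <= deg H v) ->
  2 * n <= 5 * #|H|.
Proof.
move=> H3 Hcov Hdeg.
pose w (v : 'I_n) := if deg H v <= 1 then 2 else 1.
have low : forall v, 2 <= deg H v * w v.
  move=> v.
  have : v \in \bigcup_(h in H) h by rewrite Hcov inE.
  case/bigcupP=> h hH vh.
  have d1 : 0 < deg H v by apply/card_gt0P; exists h; rewrite inE hH vh.
  rewrite /w; case: ifP => Hd.
    by have -> : deg H v = 1 by apply/eqP; rewrite eqn_leq Hd d1.
  by rewrite muln1 ltnNge Hd.
have edge : forall h, h \in H -> \sum_(v in h) w v <= 5.
  move=> h hH; case: (Hdeg h hH) => v0 v0h dv0.
  rewrite (bigD1 v0) //=.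
  have -> : w v0 = 1 by rewrite /w leqNgt dv0.
  have : \sum_(v in h | v != v0) w v <= \sum_(v in h | v != v0) 2.
    by apply: leq_sum => v _; rewrite /w; case: ifP.
  rewrite sum_nat_const.
  have -> : #|[pred v in h | v != v0]| = 2.
    have := cardsD1 v0 h; rewrite v0h H3 // => /eqP; rewrite eqSS => /eqP ->.
    by apply: eq_card => v; rewrite !inE andbC.
  by move=> le; rewrite add1n ltnS.
have E : \sum_(v : 'I_n) deg H v * w v = \sum_(h in H) \sum_(v in h) w v.
  transitivity (\sum_(v : 'I_n) \sum_(h | (h \in H) && (v \in h)) w v).
    apply: eq_bigr => v _; rewrite /deg -sum_nat_const.
    by apply: eq_bigl => h; rewrite inE.
  rewrite (exchange_big_dep (fun h => h \in H)) /=; last by move=> v h _ /andP[].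
  by apply: eq_bigr => h hH; apply: eq_bigl => v; rewrite hH.
have : \sum_(v : 'I_n) 2 <= \sum_(h in H) 5.
  apply: (@leq_trans (\sum_(v : 'I_n) deg H v * w v)).
    by apply: leq_sum => v _; apply: low.
  rewrite E.
  exact: leq_sum.
by rewrite !sum_nat_const card_ord cardE /= -cardE mulnC [5 * _]mulnC.
Qed.
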